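(* Let $\Sigma\subset\mathbb R^d$ be a bounded open set containing $0$. Then: (a) for each $x\in\mathbb R^d\setminus\{0\}$ the limit $R_\Sigma(x):=\lim_{\varepsilon\searrow0}\big(\int_\varepsilon^{+\infty}\frac{d\mu}{\mu}1_\Sigma(\mu x)+\ln\varepsilon\big)$ exists; (b) the even function $G_\Sigma:\mathbb R^d\setminus\{0\}\to\mathbb R$, $G_\Sigma(x)=\tfrac12[R_\Sigma(x)+R_\Sigma(-x)]$, satisfies $G_\Sigma(x)=G_\Sigma\big(\frac{x}{|x|}\big)-\ln|x|$; (c) if $\Sigma$ is star-shaped with respect to $0$, then $G_\Sigma(\omega)=\tfrac12[\ln\ell_\Sigma(\omega)+\ln\ell_\Sigma(-\omega)]$ for each $\omega\in S^{d-1}$.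
   Context: $1_\Sigma$ is the characteristic function of $\Sigma$. For an open set $\Sigma$ star-shaped with respect to $0$, $\ell_\Sigma:S^{d-1}\to\,]0,\infty[$ is defined by $\ell_\Sigma(\omega)=\sup\{\mu\ge0:\mu\omega\in\Sigma\}$. *)

(* Defs.v *)
From HB Require Import structures.
From mathcomp Require Import all_boot all_order all_algebra.
From mathcomp Require Import all_classical all_reals all_analysis.
Set Implicit Arguments. Unset Strict Implicit. Unset Printing Implicit Defensive.
Import Order.TTheory GRing.Theory Num.Theory.
Import numFieldNormedType.Exports.
Local Open Scope classical_set_scope.
Local Open Scope ring_scope.

(* Euclidean norm |x| on R^d (the canonical norm of 'rV is the max norm). *)
Definition enorm (R : realType) (d : nat) (x : 'rV[R]_d) : R :=
  Num.sqrt (\sum_(i < d) x ord0 i ^+ 2).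

Definition trunc_int (R : realType) (d : nat) (Sigma : set 'rV[R]_d)
  (x : 'rV[R]_d) (eps : R) : \bar R :=
  (\int[@lebesgue_measure R]_(mu in `[eps, +oo[) (mu^-1 * \1_Sigma (mu *: x))%:E)%E.

Definition RS_approx (R : realType) (d : nat) (Sigma : set 'rV[R]_d)
  (x : 'rV[R]_d) (eps : R) : \bar R :=
  (trunc_int Sigma x eps + (ln eps)%:E)%E.

Definition RS (R : realType) (d : nat) (Sigma : set 'rV[R]_d) (x : 'rV[R]_d) : R :=
  fine (lim (RS_approx Sigma x eps @[eps --> 0^'+])).

Definition GS (R : realType) (d : nat) (Sigma : set 'rV[R]_d) (x : 'rV[R]_d) : R :=
  (RS Sigma x + RS Sigma (- x)) / 2.

Definition star_shaped0 (R : realType) (d : nat) (Sigma : set 'rV[R]_d) : Prop :=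
  forall x, Sigma x -> forall t : R, 0 <= t <= 1 -> Sigma (t *: x).

Definition ellS (R : realType) (d : nat) (Sigma : set 'rV[R]_d) (w : 'rV[R]_d) : R :=
  sup [set mu : R | 0 <= mu /\ Sigma (mu *: w)].

(* Main.v *)
Require Import Defs.
From HB Require Import structures.
From mathcomp Require Import all_boot all_order all_algebra.
From mathcomp Require Import all_classical all_reals all_analysis.
From mathcomp Require Import measurable_realfun.
From mathcomp Require Import ring lra.
Import Order.TTheory GRing.Theory Num.Theory.
Import numFieldNormedType.Exports.
Local Open Scope classical_set_scope.
Local Open Scope ring_scope.
Set Implicit Arguments. Unset Strict Implicit.

Section L.
Context {R : realType}.
Local Notation mu := (@lebesgue_measure R).

Lemma int_inv_cc (a b : R) : 0 < a -> a < b ->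
  (\int[mu]_(t in `[a, b]) (t^-1)%:E = (ln b - ln a)%:E)%E.
Proof.
move=> a0 ab.
rewrite EFinB (@continuous_FTC2 _ _ (@ln R))//.
- apply: continuous_in_subspaceT => x; rewrite inE/= in_itv/= => /andP[ax _].
  by apply: inv_continuous; rewrite gt_eqF// (lt_le_trans a0).
- split.
  + move=> x; rewrite in_itv/= => /andP[ax _].
    by have /is_derive1_ln [] : 0 < x by rewrite (lt_trans a0).
  + apply: cvg_at_right_filter; exact: continuous_ln.
  + apply: cvg_at_left_filter; apply: continuous_ln; exact: (lt_trans a0).
- move=> x; rewrite in_itv/= => /andP[ax _].
  have x0 : 0 < x by rewrite (lt_trans a0).
  by rewrite derive1E; apply: derive_val; exact: is_derive1_ln.
Qed.

Lemma mu_scale (r : R) (r0 : 0 < r) (A : set R) : measurable A ->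
  mu A = (r%:E * pushforward mu ( *%R r : R -> measurableTypeR R) A)%E.
Proof.
move=> mA.
have -> := @lebesgue_measure_unique R
   (mscale (NngNum (ltW r0)) (pushforward mu ( *%R r : R -> measurableTypeR R))) _ A mA.
- by [].
- move=> _ [[x1 x2] _ <-].
  change (mu `]x1, x2] = (r%:E * mu (( *%R r) @^-1` `]x1, x2]))%E).
  have -> : ( *%R r) @^-1` `]x1, x2] = `]x1 / r, x2 / r]%classic.
    apply/seteqP; split => t /=; rewrite !in_itv/= => /andP[h1 h2];
      apply/andP; split.
    - by rewrite ltr_pdivrMr// mulrC.
    - by rewrite ler_pdivlMr// mulrC.
    - by rewrite -ltr_pdivrMl// mulrC.
    - by rewrite -ler_pdivlMl// mulrC.
  rewrite !lebesgue_measure_itv/= !lte_fin ltr_pM2r ?invr_gt0//.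
  case: ifPn => _; last by rewrite mule0.
  by rewrite -EFinM -EFinB; congr EFin; field; rewrite gt_eqF.
Qed.

Lemma int_scale (r a : R) (g : R -> R) : 0 < r ->
  measurable_fun `[r * a, +oo[ g -> (forall t, r * a <= t -> 0 <= g t) ->
  (\int[mu]_(t in `[a, +oo[) (g (r * t)%R)%:E =
   (r^-1)%:E * \int[mu]_(t in `[(r * a)%R, +oo[) (g t)%:E)%E.
Proof.
move=> r0 mg g0.
set phi := ( *%R r : R -> measurableTypeR R).
have mphi : measurable_fun setT phi by exact: measurable_realfun.mulrl_measurable.
have H : (\int[mu]_(t in `[(r * a)%R, +oo[) (g t)%:E =
   \int[mscale (NngNum (ltW r0)) (pushforward mu phi)]_(t in `[(r * a)%R, +oo[) (g t)%:E)%E.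
  move=> m.
  apply: (eq_measure_integral (mscale (NngNum (ltW r0)) (pushforward mu phi))) => A mA _.
  exact: mu_scale.
rewrite (H mphi).
rewrite ge0_integral_mscale//=; last 2 first.
- exact/measurable_realfun.measurable_EFinP.
- by move=> t; rewrite /= in_itv/= andbT => /g0; rewrite lee_fin.
rewrite ge0_integral_pushforward//=; last 2 first.
- exact/measurable_realfun.measurable_EFinP.
- by move=> t; rewrite inE /= in_itv/= andbT => /g0; rewrite lee_fin.
have -> : phi @^-1` `[r * a, +oo[ = `[a, +oo[%classic.
  apply/seteqP; split => t /=; rewrite !in_itv/= !andbT.
  - by rewrite ler_pM2l.
  - by rewrite ler_pM2l.
by rewrite muleA -EFinM mulVf ?gt_eqF// mul1e.
Qed.

Lemma inv_meas : measurable_fun (`]0, +oo[ : set R) (fun t : R => t^-1).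
Proof.
apply: open_continuous_measurable_fun; first exact: interval_open.
move=> t; rewrite inE/= in_itv/= andbT => t0.
by apply: inv_continuous; rewrite gt_eqF.
Qed.

Lemma int_inv_co (a b : R) : 0 < a -> a <= b ->
  (\int[mu]_(t in `[a, b[) (t^-1)%:E = (ln b - ln a)%:E)%E.
Proof.
move=> a0; rewrite le_eqVlt => /predU1P[<-|ab].
  by rewrite set_itv_ge ?integral_set0 ?subrr// bnd_simp ltxx.
rewrite integral_itv_bndo_bndc ?int_inv_cc//.
apply/measurable_EFinP; apply: measurable_funS inv_meas => //.
by move=> t /=; rewrite !in_itv/= => /andP[aT _]; rewrite andbT (lt_le_trans a0).
Qed.

Lemma split_int (f : R -> R) (a b : R) : 0 < a -> a <= b ->
  measurable_fun (`]0, +oo[ : set R) f -> (forall t, 0 < t -> 0 <= f t) ->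
  (\int[mu]_(t in `[a, +oo[) (f t)%:E =
   \int[mu]_(t in `[a, b[) (f t)%:E + \int[mu]_(t in `[b, +oo[) (f t)%:E)%E.
Proof.
move=> a0 ab mf f0.
rewrite (@itv_bndbnd_setU _ _ (BLeft a) (BLeft b) +oo%O) ?bnd_simp//.
apply: ge0_integral_setU => //.
- rewrite -itv_bndbnd_setU ?bnd_simp//.
  apply/measurable_EFinP; apply: measurable_funS mf => //.
  by move=> t /=; rewrite !in_itv/= !andbT => aT; rewrite (lt_le_trans a0).
- move=> t; rewrite -itv_bndbnd_setU ?bnd_simp//= in_itv/= andbT => aT.
  by rewrite lee_fin f0// (lt_le_trans a0).
- apply/disj_setPS => t [] /=; rewrite !in_itv/= andbT => /andP[_ tb] bt.
  by move: (lt_le_trans tb bt); rewrite ltxx.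
Qed.
End L.

Section Main.
Context {R : realType} (d : nat) (Sigma : set 'rV[R]_d).
Hypotheses (oS : open Sigma) (bS : bounded_set Sigma) (S0 : Sigma 0).
Local Notation mu := (@lebesgue_measure R).

Definition hh (x : 'rV[R]_d) (t : R) : R := t^-1 * \1_Sigma (t *: x).

Lemma open_E (x : 'rV[R]_d) : open [set t : R | Sigma (t *: x)].
Proof.
apply: (@open_comp _ _ (fun t : R => t *: x) Sigma) => //.
move=> t _; exact: scalel_continuous.
Qed.

Lemma hh_meas x : measurable_fun (`]0, +oo[ : set R) (hh x).
Proof.
apply: measurable_funM; first exact: inv_meas.
have -> : (fun t : R => \1_Sigma (t *: x) : R) = \1_[set t : R | Sigma (t *: x)].
  by apply/funext => t; rewrite !indicE.
apply: measurable_indic; apply: open_measurable; exact: open_E.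
Qed.

Lemma hh_ge0 x t : 0 < t -> 0 <= hh x t.
Proof. by move=> t0; rewrite /hh mulr_ge0// ?invr_ge0 ?ltW. Qed.

Lemma near0 x : exists2 del : R, 0 < del & forall t, 0 <= t <= del -> Sigma (t *: x).
Proof.
have : nbhs (0 : R) [set t : R | Sigma (t *: x)].
  apply: open_nbhs_nbhs; split; first exact: open_E.
  by rewrite /= scale0r.
move=> /nbhs_ballP [e /= e0 He].
exists (e / 2); first by rewrite divr_gt0.
move=> t /andP[t0 te]; apply: He.
rewrite -ball_normE /= sub0r normrN ger0_norm//.
by rewrite (le_lt_trans te)// ltr_pdivrMr// ltr_pMr// ltr1n.
Qed.

Lemma far x : x != 0 -> exists2 M : R, 0 < M & forall t, M <= t -> ~ Sigma (t *: x).
Proof.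
move=> x0; case: bS => M0 [_ HM].
have := HM (`|M0| + 1) _; rewrite /globally /= => H.
have {}H : forall y, Sigma y -> `|y| <= `|M0| + 1.
  apply: H; rewrite (le_lt_trans (ler_norm _))// ltrDl//.
have nx : 0 < `|x| by rewrite normr_gt0.
exists ((`|M0| + 2) / `|x|); first by rewrite divr_gt0// ltr_wpDl.
move=> t Mt /H; rewrite normrZ.
have t0 : 0 < t by rewrite (lt_le_trans _ Mt)// divr_gt0// ltr_wpDl.
rewrite gtr0_norm//.
move: Mt; rewrite ler_pdivrMr// => Mt Ht.
have := le_trans Mt Ht; lra.
Qed.

Lemma meas_sub (f : R -> R) (a : R) b : 0 < a ->
  measurable_fun (`]0, +oo[ : set R) f ->
  measurable_fun [set` Interval (BLeft a) b] (fun t => (f t)%:E).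
Proof.
move=> a0 mf; apply/measurable_EFinP; apply: measurable_funS mf => //.
move=> t /=; rewrite !in_itv/= andbT => /andP[aT _]; exact: lt_le_trans aT.
Qed.

Lemma RS_cst x (c eta : R) : 0 < eta ->
  (forall e, 0 < e -> e < eta -> RS_approx Sigma x e = c%:E) ->
  (RS_approx Sigma x e @[e --> 0^'+] --> c%:E) /\ RS Sigma x = c.
Proof.
move=> eta0 Hc.
have H : RS_approx Sigma x e @[e --> 0^'+] --> c%:E.
  apply: cvg_near_cst; near=> e; apply: Hc.
  - by near: e; exact: nbhs_right_gt.
  - by near: e; exact: nbhs_right_lt.
split => //.
by rewrite /RS (cvg_lim _ H).
Unshelve. all: by end_near.
Qed.

Lemma trunc_hh x e : trunc_int Sigma x e = (\int[mu]_(t in `[e, +oo[) (hh x t)%:E)%E.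
Proof. by []. Qed.

Lemma stepA x : x != 0 -> exists2 eta : R, 0 < eta &
  exists c : R, forall e, 0 < e -> e < eta -> RS_approx Sigma x e = c%:E.
Proof.
move=> x0.
have [del del0 Hdel] := near0 x.
have [M M0 HM] := far x0.
set M' := M + del.
have delM : del <= M' by rewrite /M' lerDr ltW.
set C := (\int[mu]_(t in `[del, +oo[) (hh x t)%:E)%E.
have Cfin : C \is a fin_num.
  have C0 : (0 <= C)%E.
    apply: integral_ge0 => t; rewrite /= in_itv/= andbT => dt.
    by rewrite lee_fin hh_ge0// (lt_le_trans del0).
  rewrite ge0_fin_numE//.
  rewrite /C (split_int del0 delM (hh_meas x)); last by move=> t; exact: hh_ge0.
  rewrite [X in (_ + X)%E]integral0_eq; last first.
    move=> t; rewrite /= in_itv/= andbT => Mt.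
    rewrite /hh indicE memNset ?mulr0// => /HM; apply.
    by rewrite (le_trans _ Mt)// /M' lerDl ltW.
  rewrite adde0 (@le_lt_trans _ _ (ln M' - ln del)%:E)// ?ltry//.
  rewrite -int_inv_co//.
  apply: ge0_le_integral => //.
  - by move=> t; rewrite /= in_itv/= => /andP[dt _]; rewrite lee_fin hh_ge0// (lt_le_trans del0).
  - exact: meas_sub (hh_meas x).
  - exact: meas_sub inv_meas.
  - move=> t; rewrite /= in_itv/= => /andP[dt _]; rewrite lee_fin /hh indicE.
    have t0 : 0 < t by rewrite (lt_le_trans del0).
    by case: (t *: x \in Sigma); rewrite /= ?mulr1 ?mulr0 ?invr_ge0 ?lexx ?(ltW t0).
exists del => //; exists (ln del + fine C) => e e0 edel.
rewrite /RS_approx trunc_hh (split_int e0 (ltW edel) (hh_meas x)); last first.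
  by move=> t; exact: hh_ge0.
rewrite -/C.
have -> : (\int[mu]_(t in `[e, del[) (hh x t)%:E = \int[mu]_(t in `[e, del[) (t^-1)%:E)%E.
  apply: eq_integral => t; rewrite inE /= in_itv/= => /andP[et td].
  rewrite /hh indicE mem_set ?mulr1//; apply: Hdel.
  by rewrite ltW ?(lt_le_trans e0)// ltW.
rewrite int_inv_co// ?ltW// -(fineK Cfin) -!EFinD; congr EFin; ring.
Qed.

Lemma hh_scale w r t : r != 0 -> hh w (r * t) = r^-1 * hh (r *: w) t.
Proof.
move=> r0; rewrite /hh scalerA [t * r]mulrC invfM mulrA.
by [].
Qed.

Lemma trunc_scale w r e : 0 < r -> 0 < e ->
  trunc_int Sigma (r *: w) e = trunc_int Sigma w (r * e).
Proof.
move=> r0 e0; rewrite !trunc_hh.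
have mg : measurable_fun `[r * e, +oo[ (hh w).
  apply: measurable_funS (hh_meas w) => // t /=; rewrite !in_itv/= !andbT.
  by apply: lt_le_trans; rewrite mulr_gt0.
have g0 : forall t, r * e <= t -> 0 <= hh w t.
  by move=> t ret; apply: hh_ge0; rewrite (lt_le_trans _ ret)// mulr_gt0.
have := int_scale r0 mg g0.
under eq_integral => t _ do rewrite hh_scale ?gt_eqF// EFinM.
rewrite ge0_integralZl_EFin//; last 3 first.
- by move=> t; rewrite /= in_itv/= andbT => et; rewrite lee_fin hh_ge0// (lt_le_trans e0).
- exact: meas_sub (hh_meas (r *: w)).
- by rewrite invr_ge0 ltW.
move=> H.
have := congr1 (fun z => r%:E * z)%E H.
by rewrite /= !muleA -EFinM mulfV ?gt_eqF// !mul1e => <-.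
Qed.

Lemma RSa_scale w r e : 0 < r -> 0 < e ->
  RS_approx Sigma (r *: w) e = (RS_approx Sigma w (r * e) - (ln r)%:E)%E.
Proof.
move=> r0 e0; rewrite /RS_approx trunc_scale// lnM ?posrE//.
by rewrite EFinD [((ln r)%:E + _)%E]addeC addeA addeK.
Qed.

Lemma RS_scale w r : w != 0 -> 0 < r -> RS Sigma (r *: w) = RS Sigma w - ln r.
Proof.
move=> w0 r0.
have [eta eta0 [c Hc]] := stepA w0.
rewrite (RS_cst eta0 Hc).2.
apply: (@RS_cst (r *: w) (c - ln r) (eta / r) _ _).2; first by rewrite divr_gt0.
move=> e e0 ee.
rewrite RSa_scale// Hc ?mulr_gt0//; last by rewrite mulrC -ltr_pdivlMr.
Qed.

Lemma ell_char w : star_shaped0 Sigma -> w != 0 ->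
  0 < ellS Sigma w /\ forall t, 0 <= t -> (Sigma (t *: w) <-> t < ellS Sigma w).
Proof.
move=> st w0.
set S := [set mu : R | 0 <= mu /\ Sigma (mu *: w)].
have [del del0 Hdel] := near0 w.
have [M M0 HM] := far w0.
have S0' : S !=set0 by exists 0; split => //; rewrite scale0r.
have Sub : has_ubound S.
  exists M => t [t0 St]; rewrite leNgt; apply/negP => Mt.
  exact: (HM t (ltW Mt)).
have Sdel : S del by split; [exact: ltW | apply: Hdel; rewrite lexx ltW].
have ell0 : 0 < ellS Sigma w.
  by rewrite (lt_le_trans del0)//; exact: ub_le_sup.
split => // t t0; split.
- move=> St.
  have : nbhs t [set s : R | Sigma (s *: w)].
    by apply: open_nbhs_nbhs; split; [exact: open_E|].
  move=> /nbhs_ballP [e /= e0 He].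
  have Ste : S (t + e / 2).
    split; first by rewrite addr_ge0// ltW// divr_gt0.
    apply: He; rewrite -ball_normE /= opprD addrA subrr sub0r normrN ger0_norm.
      by rewrite ltr_pdivrMr// ltr_pMr// ltr1n.
    by rewrite ltW// divr_gt0.
  apply: (lt_le_trans _ (ub_le_sup Sub Ste)).
  by rewrite ltrDl divr_gt0.
- move=> tl.
  have [s [s0 Ss] ts] := sup_gt S0' tl.
  have sp : 0 < s by exact: le_lt_trans ts.
  have := st _ Ss (t / s).
  rewrite scalerA mulfVK ?gt_eqF//; apply.
  apply/andP; split; first exact: divr_ge0 t0 (ltW sp).
  by rewrite ler_pdivrMr// mul1r ltW.
Qed.

Lemma RS_star w : star_shaped0 Sigma -> w != 0 -> RS Sigma w = ln (ellS Sigma w).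
Proof.
move=> st w0.
have [ell0 Hell] := ell_char st w0.
apply: (@RS_cst w (ln (ellS Sigma w)) _ ell0 _).2 => e e0 el.
rewrite /RS_approx trunc_hh (split_int e0 (ltW el) (hh_meas w)); last first.
  by move=> t; exact: hh_ge0.
rewrite [X in ((_ + X) + _)%E]integral0_eq; last first.
  move=> t; rewrite /= in_itv/= andbT => lt.
  rewrite /hh indicE memNset ?mulr0// => /Hell.
  rewrite ltNge lt => /(_ (le_trans (ltW ell0) lt)) //.
have -> : (\int[mu]_(t in `[e, ellS Sigma w[) (hh w t)%:E =
     \int[mu]_(t in `[e, ellS Sigma w[) (t^-1)%:E)%E.
  apply: eq_integral => t; rewrite inE /= in_itv/= => /andP[et tl].
  rewrite /hh indicE mem_set ?mulr1//; apply/Hell => //.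
  by rewrite ltW ?(lt_le_trans e0).
rewrite int_inv_co// ?ltW// adde0 -EFinD; congr EFin; ring.
Qed.

Lemma enorm_gt0 (x : 'rV[R]_d) : x != 0 -> 0 < enorm x.
Proof.
move=> x0; rewrite /enorm sqrtr_gt0.
case/boolP: [exists i, x ord0 i != 0] => [/existsP[i xi]|/existsPn H]; last first.
  case/eqP: x0; apply/matrixP => a b; rewrite (ord1 a) mxE.
  by have := H b; rewrite negbK => /eqP.
rewrite (bigD1 i)//=.
have h1 : 0 < x ord0 i ^+ 2 by rewrite exprn_even_gt0.
have h2 : 0 <= \sum_(j < d | j != i) x ord0 j ^+ 2 by apply: sumr_ge0 => j _; exact: sqr_ge0.
lra.
Qed.

Lemma enorm0 : enorm (0 : 'rV[R]_d) = 0.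
Proof.
rewrite /enorm big1 ?sqrtr0// => i _; by rewrite mxE expr0n.
Qed.

Lemma main_in :
  [/\ (forall x : 'rV[R]_d, x != 0 ->
         exists l : R, RS_approx Sigma x eps @[eps --> 0^'+] --> l%:E),
      (forall x : 'rV[R]_d, x != 0 ->
         GS Sigma x = GS Sigma ((enorm x)^-1 *: x) - ln (enorm x)) &
      (star_shaped0 Sigma ->
         forall w : 'rV[R]_d, enorm w = 1 ->
           GS Sigma w = (ln (ellS Sigma w) + ln (ellS Sigma (- w))) / 2)].
Proof.
split.
- move=> x x0; have [eta eta0 [c Hc]] := stepA x0.
  by exists c; exact: (RS_cst eta0 Hc).1.
- move=> x x0.
  have r0 := enorm_gt0 x0.
  set r := enorm x; set w := r^-1 *: x.
  have w0 : w != 0 by rewrite scaler_eq0 negb_or invr_eq0 gt_eqF.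
  have wN0 : - w != 0 by rewrite oppr_eq0.
  have xE : x = r *: w by rewrite /w scalerA mulfV ?gt_eqF// scale1r.
  have xNE : - x = r *: (- w) by rewrite xE scalerN.
  rewrite /GS xNE {1}xE (RS_scale w0 r0) (RS_scale wN0 r0).
  by rewrite -/w; field.
- move=> st w w1.
  have w0 : w != 0.
    by apply/eqP => wz; move: w1; rewrite wz enorm0 => /eqP; rewrite eq_sym oner_eq0.
  have wN0 : - w != 0 by rewrite oppr_eq0.
  by rewrite /GS !RS_star.
Qed.
End Main.

Unset Implicit Arguments.

Theorem mainTheorem4 (R : realType) (d : nat) (Sigma : set 'rV[R]_d) :
  open Sigma -> bounded_set Sigma -> Sigma 0 ->
  [/\ (forall x : 'rV[R]_d, x != 0 ->
         exists l : R, RS_approx Sigma x eps @[eps --> 0^'+] --> l%:E),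
      (forall x : 'rV[R]_d, x != 0 ->
         GS Sigma x = GS Sigma ((enorm x)^-1 *: x) - ln (enorm x)) &
      (star_shaped0 Sigma ->
         forall w : 'rV[R]_d, enorm w = 1 ->
           GS Sigma w = (ln (ellS Sigma w) + ln (ellS Sigma (- w))) / 2)].
Proof.
move=> oS bS S0; exact: main_in oS bS S0.
Qed.
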